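(* Fix a constant $0<\alpha<1$. For integers $1\le D\le \alpha n$, the number of pairwise non-isomorphic graphs in the class $\mathcal{L}(n,D)$ of lollipops is at least $$\frac{\big((\lceil n(1-\alpha)\rceil-1)!\big)^{\lceil n(1-\alpha)\rceil}}{\lceil n(1-\alpha)\rceil!}.$$
   Context: Port-labeled graphs: finite simple undirected connected graphs without node labels, where at each node of degree $d$ the incident edges carry distinct port numbers $0,\dots,d-1$; isomorphism is a bijection of nodes preserving edges and port numbers at both endpoints. A lollipop in $\mathcal{L}(n,D)$ has $n$ nodes partitioned into the candy $\{w_1,\dots,w_{n-D}\}$ and the stick $\{s_1,\dots,s_D\}$. The candy nodes form a clique whose edges receive port numbers from $\{0,\dots,n-D-2\}$ at each candy node in an arbitrary way (each candy node using each of these ports exactly once). The stick is the path $s_1,\dots,s_D$ where edge $\{s_j,s_{j+1}\}$ has port $0$ at $s_j$ and port $1$ at $s_{j+1}$; write $u=s_1$ and $v=s_D$ ($u=v$ if $D=1$). Node $v$ is joined to every candy node $w_i$; at each $w_i$ this edge has port $n-D-1$; at $v$ it has port $0$ if $i=1$, and for $i>1$ port $i$ if $u\ne v$ and port $i-1$ if $u=v$. The class $\mathcal{L}(n,D)$ consists of all lollipops obtained by all choices of the port numbering inside the candy. *)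

(* Defs.v *)
From HB Require Import structures.
From mathcomp Require Import all_boot all_order all_algebra all_fingroup.
From mathcomp Require Import reals.
Set Implicit Arguments. Unset Strict Implicit. Unset Printing Implicit Defensive.
Import Order.TTheory GRing.Theory Num.Theory.

(* A port-labeled graph on the node set 'I_n is given by an adjacency relation
   [adj] and a port function [port x y] = port number at x of the edge {x,y}
   (meaningful only when [adj x y]). *)

Definition pl_iso n (adj1 : rel 'I_n) (port1 : 'I_n -> 'I_n -> nat)
                    (adj2 : rel 'I_n) (port2 : 'I_n -> 'I_n -> nat) : Prop :=
  exists f : {perm 'I_n},
    (forall x y, adj2 (f x) (f y) = adj1 x y) /\
    (forall x y, adj1 x y -> port2 (f x) (f y) = port1 x y).

(* Lollipops in L(n,D).  Let c := n - D.  Candy node w_i (1 <= i <= c) is the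
   node i-1; stick node s_j (1 <= j <= D) is the node c + j - 1.  Hence
   u = s_1 = node c and v = s_D = node n-1. *)
Section Lollipop.
Variables n D : nat.
Local Notation c := (n - D).

Definition candy (x : 'I_n) : bool := x < c.

Definition lolli_adj : rel 'I_n := fun x y =>
  [|| [&& candy x, candy y & x != y],
      [&& c <= x, c <= y & ((x == y.+1 :> nat) || (y == x.+1 :> nat))],
      (candy x && (y == n.-1 :> nat))
    | ((x == n.-1 :> nat) && candy y)].

Definition lolli_port (cp : 'I_n -> 'I_n -> nat) (x y : 'I_n) : nat :=
  if candy x && candy y then cp x y
  else if candy x && (y == n.-1 :> nat) then c.-1
  else if (x == n.-1 :> nat) && candy y then
    (if y == 0 :> nat then 0 else if 1 < D then y.+1 else (y : nat))
  else if y == x.+1 :> nat then 0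
  else if x == y.+1 :> nat then 1
  else 0.

Definition candy_numbering (cp : 'I_n -> 'I_n -> nat) : Prop :=
  forall x : 'I_n, candy x ->
    (forall y : 'I_n, candy y -> y != x -> cp x y < c.-1) /\
    (forall q, q < c.-1 ->
       #|[set y : 'I_n | [&& candy y, y != x & cp x y == q]]| = 1).

End Lollipop.
Arguments candy : clear implicits.
Arguments lolli_adj : clear implicits.
Arguments lolli_port : clear implicits.
Arguments candy_numbering : clear implicits.

(* Main.v *)
Require Import Defs.
From HB Require Import structures.
From mathcomp Require Import all_boot all_order all_algebra all_fingroup.
From mathcomp Require Import reals.
From mathcomp Require Import zify.
Import Order.TTheory GRing.Theory Num.Theory.
Set Implicit Arguments. Unset Strict Implicit. Unset Printing Implicit Defensive.

Definition cpn (c : nat) (p : {ffun 'I_c -> {perm 'I_c.-1}}) (x y : nat) : nat :=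
  match (insub x : option 'I_c), (insub (unbump x y) : option 'I_c.-1) with
  | Some i, Some j => val (p i j) | _, _ => 0 end.

Lemma cpn_val c p (i : 'I_c) (j : 'I_c.-1) : cpn p i (bump i j) = val (p i j).
Proof. by rewrite /cpn valK bumpK valK. Qed.

Lemma unbump_lt c x y : x < c -> y < c -> y != x -> unbump x y < c.-1.
Proof. rewrite /unbump; case: (ltnP x y) => /= *; lia. Qed.

Lemma cpn_spec c p x y (hx : x < c) (hy : y < c) (hyx : y != x) :
  cpn p x y = val (p (Ordinal hx) (Ordinal (unbump_lt hx hy hyx))).
Proof.
rewrite /cpn insubT /=; case: insubP => [j _ hj|/negP[]]; last exact: unbump_lt.
by do 2 f_equal; apply: val_inj.
Qed.

Section S.
Variables n D : nat.
Local Notation c := (n - D).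
Variable p : {ffun 'I_c -> {perm 'I_c.-1}}.
Definition cpo (x y : 'I_n) := cpn p x y.

Lemma cpo_numbering : candy_numbering n D cpo.
Proof.
move=> x hx; split.
  move=> y hy hyx; rewrite /cpo cpn_spec //; exact: ltn_ord.
move=> q hq.
set i : 'I_c := Ordinal hx.
set j0 := ((p i)^-1)%g (Ordinal hq).
have hb : bump x j0 < n.
  have := ltn_ord j0; rewrite /bump; case: leqP => /=; lia.
set Y := Ordinal hb.
have -> : [set y : 'I_n | [&& candy n D y, y != x & cpo x y == q]] = [set Y].
  apply/setP => y; rewrite !inE; apply/idP/idP.
  - case/and3P => hy hyx /eqP hc.
    move: hc; rewrite /cpo cpn_spec // => hc.
    have hpj : p i (Ordinal (unbump_lt hx hy hyx)) = Ordinal hq by apply: val_inj.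
    have : Ordinal (unbump_lt hx hy hyx) = j0 by rewrite /j0 -hpj permK.
    move/(congr1 val) => /= hu.
    apply/eqP/val_inj => /=; rewrite -hu unbumpKcond.
    by have := hyx; rewrite -val_eqE => /negbTE ->.
  - move/eqP => ->; apply/and3P; split.
    + rewrite /candy /=; have := ltn_ord j0; rewrite /bump; case: leqP => /=; lia.
    + rewrite -val_eqE /= eq_sym; exact: neq_bump.
    + rewrite /cpo /=; have := cpn_val p i j0; rewrite /= => ->; by rewrite /j0 permKV.
by rewrite cards1.
Qed.
End S.


Section S.
Variables n D : nat.
Local Notation c := (n - D).
Hypothesis c3 : 2 < c.
Hypothesis D1 : 1 <= D.

Lemma onlyv (cp : 'I_n -> 'I_n -> nat)
  (Hcp : forall x y : 'I_n, x < c -> y < c -> x != y -> cp x y < c.-1)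
  (z y : 'I_n) : lolli_adj n D z y -> lolli_port n D cp z y = 0 ->
     lolli_port n D cp y z = c.-1 -> val z = n.-1.
Proof.
have h1 := Hcp z y; have h2 := Hcp y z.
move: h1 h2; rewrite -!val_eqE.
have := ltn_ord z; have := ltn_ord y.
rewrite /lolli_adj /lolli_port /candy /= -!val_eqE /=.
repeat case: ifP; lia.
Qed.


Lemma adj_sym x y : lolli_adj n D x y = lolli_adj n D y x.
Proof. rewrite /lolli_adj /candy -?val_eqE /=; apply/idP/idP; lia. Qed.

Lemma port_v_indep cp cp' (x y : 'I_n) : val x = n.-1 ->
  lolli_port n D cp x y = lolli_port n D cp' x y.
Proof. move=> hx; rewrite /lolli_port /candy hx; have : c <= n.-1 by lia.
by rewrite leqNgt => /negbTE ->. Qed.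

Lemma v_has cp (v0 w0 : 'I_n) : val v0 = n.-1 -> val w0 = 0 ->
  [/\ lolli_adj n D v0 w0, lolli_port n D cp v0 w0 = 0 &
      lolli_port n D cp w0 v0 = c.-1].
Proof.
move=> hv hw; rewrite /lolli_adj /lolli_port /candy -?val_eqE /= hv hw.
split; repeat case: ifP; lia.
Qed.

Lemma v_adj_candy (v0 y : 'I_n) : val v0 = n.-1 -> y < c -> lolli_adj n D v0 y.
Proof. move=> hv hy; rewrite /lolli_adj /candy -?val_eqE /= hv; lia. Qed.

Lemma port_v_inj cp (v0 y y' : 'I_n) : val v0 = n.-1 ->
  lolli_adj n D v0 y -> lolli_adj n D v0 y' ->
  lolli_port n D cp v0 y = lolli_port n D cp v0 y' -> y = y'.
Proof.
move=> hv; have := ltn_ord y; have := ltn_ord y'.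
rewrite /lolli_adj /lolli_port /candy -?val_eqE /= hv => h1 h2 a1 a2 e.
apply: ord_inj; move: h1 h2 a1 a2 e.
repeat case: ifP; lia.
Qed.

Lemma iso_fix (cp1 cp2 : 'I_n -> 'I_n -> nat)
  (Hcp2 : forall x y : 'I_n, x < c -> y < c -> x != y -> cp2 x y < c.-1)
  (f : {perm 'I_n}) :
  (forall x y, lolli_adj n D (f x) (f y) = lolli_adj n D x y) ->
  (forall x y, lolli_adj n D x y ->
     lolli_port n D cp2 (f x) (f y) = lolli_port n D cp1 x y) ->
  forall x y : 'I_n, x < c -> y < c -> x != y -> cp2 x y = cp1 x y.
Proof.
move=> Ha Hp.
have n0 : n.-1 < n by lia.
have n1 : 0 < n by lia.
set v0 := Ordinal n0; set w0 := Ordinal n1.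
have [a1 p1 q1] := v_has cp1 (v0:=v0) (w0:=w0) erefl erefl.
have fv : f v0 = v0.
  apply: val_inj; rewrite /=.
  apply: (onlyv Hcp2 (y := f w0)).
  - by rewrite Ha.
  - by rewrite Hp.
  - by rewrite Hp // adj_sym.
have fy : forall y : 'I_n, y < c -> f y = y.
  move=> y hy; have ay := v_adj_candy (v0:=v0) erefl hy.
  apply: (port_v_inj (cp:=cp2) (v0:=v0)) => //.
  - by rewrite -fv Ha.
  - by rewrite -[in LHS]fv Hp // (port_v_indep _ cp1).
move=> x y hx hy hxy.
have axy : lolli_adj n D x y.
  by rewrite /lolli_adj /candy hx hy hxy.
have := Hp x y axy; rewrite !fy // /lolli_port /candy hx hy //.
Qed.
End S.

Lemma fact_mono m n : m <= n -> m`! <= n`!.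
Proof. elim: n => [|n IH]; first by rewrite leqn0 => /eqP->.
rewrite leq_eqVlt => /orP[/eqP->//|/IH]; rewrite factS => h.
apply: leq_trans h _; by rewrite leq_pmull. Qed.

Lemma k_le_c (R : realType) (alpha : R) (n D : nat) :
  (0 < alpha)%R -> (alpha < 1)%R ->
  1 <= D -> (D%:R <= alpha * n%:R)%R ->
  `|Num.ceil (n%:R * (1 - alpha))%R|%N <= n - D.
Proof.
move=> a0 a1 D1 hD.
have hDn : D <= n.
  rewrite -(ler_nat R); apply: (le_trans hD).
  by rewrite ler_piMl // ltW.
have hx : (n%:R * (1 - alpha) <= (n - D)%:R :> R)%R.
  rewrite natrB // mulrBr mulr1 lerD2l lerN2 mulrC //.
have h0 : (0 <= n%:R * (1 - alpha) :> R)%R.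
  by rewrite mulr_ge0 // subr_ge0 ltW.
have hc : (Num.ceil (n%:R * (1 - alpha)) <= (n - D)%:Z)%R.
  by rewrite ceil_le_int.
have hc0 : (0 <= Num.ceil (n%:R * (1 - alpha) : R))%R.
  rewrite ceil_ge0; apply: lt_le_trans h0; by rewrite ltrN10.
move: hc hc0; set z := Num.ceil _ => hc hc0.
lia.
Qed.

Theorem corollary5p3 (R : realType) (alpha : R) (n D : nat) :
  (0 < alpha)%R -> (alpha < 1)%R ->
  1 <= D -> (D%:R <= alpha * n%:R)%R ->
  let k := `|Num.ceil (n%:R * (1 - alpha))%R|%N in
  exists (m : nat) (F : 'I_m -> ('I_n -> 'I_n -> nat)),
    (forall a, candy_numbering n D (F a)) /\
    (forall a b : 'I_m, a != b ->
       ~ pl_iso (lolli_adj n D) (lolli_port n D (F a))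
                (lolli_adj n D) (lolli_port n D (F b))) /\
    (k.-1)`! ^ k <= k`! * m.
Proof.
move=> a0 a1 D1 hD k.
have hk : k <= n - D by apply: (k_le_c a0 a1 D1 hD).
pose T := {ffun 'I_(n - D) -> {perm 'I_(n - D).-1}}.
exists #|T|, (fun a => cpo (enum_val a)).
have cardT : #|T| = (n - D).-1`! ^ (n - D) by rewrite card_ffun card_Sn card_ord.
split; [|split].
- move=> a; exact: cpo_numbering.
- move=> a b hab [f [Ha Hp]].
  case: (leqP (n - D) 2) => c3.
    have T1 : #|T| = 1.
      rewrite cardT; have -> : (n - D).-1`! = 1 by case: (n - D) c3 => [|[|[|]]].
      by rewrite exp1n.
    move/negP: hab; apply; apply/eqP/ord_inj.
    have := leq_trans (ltn_ord a) (eq_leq T1).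
    have := leq_trans (ltn_ord b) (eq_leq T1).
    lia.
  have Hb : forall x y : 'I_n, x < n - D -> y < n - D -> x != y ->
      cpo (enum_val b) x y < (n - D).-1.
    move=> x y hx hy hxy; have [h _] := cpo_numbering (enum_val b) hx.
    by apply: h; rewrite // eq_sym.
  have E := iso_fix c3 D1 Hb Ha Hp.
  move/negP: hab; apply; apply/eqP; apply: enum_val_inj.
  apply/ffunP => i; apply/permP => j; apply: val_inj.
  have hi : i < n by apply: leq_trans (ltn_ord i) (leq_subr D n).
  have hj : bump i j < n.
    have := ltn_ord j; have := ltn_ord i; rewrite /bump; case: leqP => /=; lia.
  have := E (Ordinal hi) (Ordinal hj) (ltn_ord i).
  rewrite /cpo /=.
  have -> : cpn (enum_val b) i (bump i j) = val (enum_val b i j) by exact: cpn_val.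
  have -> : cpn (enum_val a) i (bump i j) = val (enum_val a i j) by exact: cpn_val.
  move=> h; symmetry; apply: h.
  + have := ltn_ord j; rewrite /bump; case: leqP => /=; lia.
  + rewrite -val_eqE /=; exact: neq_bump.
- rewrite cardT; apply: (leq_trans _ (leq_pmull _ (fact_gt0 k))).
  apply: (@leq_trans ((n - D).-1`! ^ k)).
    case: k hk => [|k'] hk; first by [].
    by rewrite leq_exp2r // fact_mono //; lia.
  apply: leq_pexp2l => //; exact: fact_gt0.
Qed.
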